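(* Suppose that $\sup_{u\in[0,1]}\|\Sigma(u)\|_2<\infty$, that $\Sigma(u)$ is positive definite for every $u$, and that $\inf_{u\in[0,1]}\Delta(u)>0$. Let $\hat\mu_1(u),\hat\mu_2(u),\hat\theta(u)$ be any estimators (depending on the sample size $n$) and put $\hat\mu(u)=(\hat\mu_1(u)+\hat\mu_2(u))/2$. If, as $n\to\infty$, $\|\hat\mu_1(u)-\mu_1(u)\|_2=o(1)$, $\|\hat\mu_2(u)-\mu_2(u)\|_2=o(1)$ and $\|\hat\theta(u)-\theta^*(u)\|_2=o(1)$, then for every $u\in[0,1]$, $$|R_n(u)-R(u)|\lesssim \|\hat\theta(u)-\theta^*(u)\|_2^2+\big|(\hat\mu(u)-\mu(u))^\top\beta^*(u)\big|^2 .$$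
   Context: Model: $U\in[0,1]$ is an exposure variable, $Y\in\{0,1\}$ a label independent of $U$ with $\mathbb P(Y=1)=\mathbb P(Y=0)=1/2$, and $X\in\mathbb R^p$ satisfies, conditionally on $U=u$, $X\sim\mathcal N(\mu_1(u),\Sigma(u))$ if $Y=1$ and $X\sim\mathcal N(\mu_2(u),\Sigma(u))$ if $Y=0$. Write $\delta(u)=\mu_1(u)-\mu_2(u)$, $\mu(u)=(\mu_1(u)+\mu_2(u))/2$, $\beta^*(u)=\Sigma(u)^{-1}\delta(u)$, $\Delta(u)=\sqrt{\delta(u)^\top\Sigma(u)^{-1}\delta(u)}$. Let $Z=\mathbb 1(Y=1)-1/2$ and let $\theta^*(u)$ be the minimizer over $\theta\in\mathbb R^p$ of $\mathbb E[(Z-\theta^\top(X-\mu(U)))^2\mid U=u]$ (a positive multiple of $\beta^*(u)$). The oracle risk is $R(u)=\Phi(-\Delta(u)/2)$, where $\Phi$ is the standard normal cdf and $\bar\Phi=1-\Phi$. The conditional misclassification risk of the rule $\mathbb 1\{(x-\hat\mu(u))^\top\hat\theta(u)\ge 0\}$ is $$R_n(u)=\tfrac12\Phi\Big(\tfrac{(\hat\mu(u)-\mu_1(u))^\top\hat\theta(u)}{\sqrt{\hat\theta(u)^\top\Sigma(u)\hat\theta(u)}}\Big)+\tfrac12\bar\Phi\Big(\tfrac{(\hat\mu(u)-\mu_2(u))^\top\hat\theta(u)}{\sqrt{\hat\theta(u)^\top\Sigma(u)\hat\theta(u)}}\Big).$$ $a\lesssim b$ means $a\le Cb$ for a constant $C$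 not depending on $n$ or $u$. *)

(* Defs.v *)
From mathcomp Require Import all_boot all_order all_algebra.
From mathcomp Require Import all_classical all_reals all_analysis.
Set Implicit Arguments. Unset Strict Implicit. Unset Printing Implicit Defensive.
Import Order.TTheory GRing.Theory Num.Theory.
Local Open Scope ring_scope.

Section Defs.
Variable R : realType.

Definition Phi (x : R) : R := fine (normal_prob 0 1 `]-oo, x]%classic).
Definition Phibar (x : R) : R := 1 - Phi x.

Definition dotv (p : nat) (a b : 'cV[R]_p) : R := (a^T *m b) 0 0.
Definition norm2 (p : nat) (a : 'cV[R]_p) : R := Num.sqrt (dotv a a).

Definition Mahal (p : nat) (Sigma : 'M[R]_p) (delta : 'cV[R]_p) : R :=
  Num.sqrt (dotv delta (invmx Sigma *m delta)).

(* E[(Z - theta^T (X - mu(U)))^2 | U = u], written as squared bias plus variance: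
   given Y=1, Z - theta^T(X-mu) ~ N(1/2 - theta^T delta/2, theta^T Sigma theta);
   given Y=0, it is ~ N(-(1/2 - theta^T delta/2), theta^T Sigma theta). *)
Definition cond_sq_loss (p : nat) (Sigma : 'M[R]_p) (delta theta : 'cV[R]_p) : R :=
  (2^-1 * (2^-1 - dotv theta delta / 2) ^+ 2
     + 2^-1 * (- 2^-1 + dotv theta delta / 2) ^+ 2)
  + dotv theta (Sigma *m theta).

(* conditional misclassification risk of x |-> 1{(x - muhat)^T thetahat >= 0} *)
Definition cond_risk (p : nat) (Sigma : 'M[R]_p) (mu1 mu2 muhat thetahat : 'cV[R]_p) : R :=
  let s := Num.sqrt (dotv thetahat (Sigma *m thetahat)) in
  2^-1 * Phi (dotv (muhat - mu1) thetahat / s)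
  + 2^-1 * Phibar (dotv (muhat - mu2) thetahat / s).

End Defs.

(* Main.v *)
Require Import Defs.
From mathcomp Require Import all_boot all_order all_algebra.
From mathcomp Require Import all_classical all_reals all_analysis.
From mathcomp Require Import measurable_realfun.
From mathcomp Require Import ring lra.
Import Order.TTheory GRing.Theory Num.Theory numFieldNormedType.Exports.
Local Open Scope classical_set_scope.
Local Open Scope ring_scope.



Section Phi.
Variable R : realType.
Notation P := (normal_prob (0:R) 1).
Notation mu := (@lebesgue_measure R).

Lemma P_finnum (A : set R) : measurable A -> P A \is a fin_num.
Proof.
move=> mA; rewrite ge0_fin_numE; last exact: measure_ge0.
exact: (le_lt_trans (probability_le1 P mA) (ltry _)).
Qed.

Lemma Phi_sub (a b : R) : a <= b -> Phi b - Phi a = fine (P `]a, b]).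
Proof.
move=> ab; rewrite /Phi.
rewrite (@itv_bndbnd_setU _ _ _ (BRight a)) ?bnd_simp//.
rewrite measureU//=; last first.
  apply/seteqP; split => x //= [/=]; rewrite !in_itv/= => xa /andP[ax _].
  by move: ax; rewrite ltNge xa.
rewrite fineD ?P_finnum//.
by rewrite addrAC subrr add0r.
Qed.

Let pdf := normal_pdf (0:R) 1.

Lemma pdf_even t : pdf (- t) = pdf t.
Proof. by rewrite /pdf /normal_pdf oner_eq0 /normal_fun !subr0 sqrrN. Qed.

Lemma Phi_sym (x : R) : Phi (- x) = 1 - Phi x.
Proof.
rewrite /Phi.
have -> : P `]-oo, - x] = P `]x, +oo[.
  rewrite /normal_prob ge0_integration_by_substitutionNy; last 2 first.
  - apply: continuous_subspaceT => t; exact: continuous_normal_pdf (oner_neq0 _) t.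
  - by move=> t _; exact: normal_pdf_ge0.
  rewrite integral_itv_obnd_cbnd; last first.
    apply/measurable_EFinP; apply: measurable_funTS; exact: measurable_normal_pdf.
  by apply: eq_integral => t _ /=; rewrite -/pdf pdf_even.
rewrite -setCitvl probability_setC// fineB// ?P_finnum//.
Qed.

Lemma mu_oc (a b : R) : a <= b -> mu `]a, b] = (b - a)%:E.
Proof.
move=> ab; rewrite lebesgue_measure_itv/= lte_fin.
case: ltP => //= ba; have -> : b = a by apply/eqP; rewrite eq_le ab ba.
by rewrite subrr.
Qed.

Lemma P_oc_bounds (a b lo hi : R) : a <= b -> 0 <= lo ->
  (forall x, a < x <= b -> lo <= pdf x <= hi) ->
  (b - a) * lo <= fine (P `]a, b]) <= (b - a) * hi.
Proof.
move=> ab lo0 H.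
have mf : measurable_fun `]a, b] (fun x => (pdf x)%:E).
  apply/measurable_EFinP; apply: measurable_funTS; exact: measurable_normal_pdf.
have mD : measurable `]a, b] by [].
have Hx : forall x, (`]a, b]%classic : set R) x -> lo <= pdf x <= hi.
  by move=> x /=; rewrite in_itv/=; exact: H.
have E1 : (((b - a) * lo)%:E <= P `]a, b])%E.
  rewrite /normal_prob -/pdf.
  have -> : ((b - a) * lo)%:E = (\int[mu]_(x in `]a, b]) (cst lo%:E) x)%E.
    rewrite integral_cst// [X in (_ * X)%E](_ : _ = (b - a)%:E); last exact: mu_oc.
    by rewrite -EFinM mulrC.
  apply: ge0_le_integral => //.
  by move=> x /Hx /andP[] /=; rewrite !lee_fin.
have E2 : (P `]a, b] <= ((b - a) * hi)%:E)%E.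
  rewrite /normal_prob -/pdf.
  have -> : ((b - a) * hi)%:E = (\int[mu]_(x in `]a, b]) (cst hi%:E) x)%E.
    rewrite integral_cst// [X in (_ * X)%E](_ : _ = (b - a)%:E); last exact: mu_oc.
    by rewrite -EFinM mulrC.
  apply: ge0_le_integral => //; try by move=> x _ /=; rewrite lee_fin; exact: normal_pdf_ge0.
  by move=> x /Hx /andP[] /=; rewrite !lee_fin.
have hP := @P_finnum _ mD.
rewrite -lee_fin fineK// E1 /= -lee_fin fineK//.
Qed.

Lemma pdfE x : pdf x = normal_peak (1:R) * expR (- (x ^+ 2) / 2).
Proof. by rewrite /pdf /normal_pdf oner_eq0 /normal_fun subr0 expr1n. Qed.

Lemma peak_gt0 : 0 < normal_peak (1:R).
Proof. exact: normal_peak_gt0 (oner_neq0 _). Qed.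

Lemma pdf_mono x y : x <= y -> y <= 0 -> pdf x <= pdf y.
Proof.
move=> xy y0; rewrite !pdfE ler_pM2l ?peak_gt0// ler_expR.
rewrite ler_pM2r ?invr_gt0// lerN2.
have x0 : x <= 0 by apply: le_trans xy y0.
nra.
Qed.

Lemma Phi_neg_bounds a b : a <= b -> b <= 0 ->
  (b - a) * pdf a <= Phi b - Phi a <= (b - a) * pdf b.
Proof.
move=> ab b0; rewrite Phi_sub//; apply: P_oc_bounds => //.
  by rewrite pdfE mulr_ge0 ?expR_ge0 ?ltW ?peak_gt0.
move=> x /andP[ax xb]; rewrite pdf_mono ?(ltW ax)//=; last exact: le_trans xb b0.
exact: pdf_mono.
Qed.

Lemma pdf_lip t k : 0 <= t -> 0 <= k ->
  pdf (t - k) - pdf (- k - t) <= 2 * k * t * pdf (t - k).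
Proof.
move=> t0 k0; rewrite !pdfE.
set A := - ((t - k) ^+ 2) / 2; set B := - ((- k - t) ^+ 2) / 2.
have hB : B = A + (- (2 * k * t)) by rewrite /A /B; field.
rewrite hB expRD.
have e1 := expR_ge1Dx (- (2 * k * t)).
have eA := expR_gt0 A; have pk := peak_gt0.
have pE := mulr_gt0 pk eA.
move: e1 pE; set e := expR _; set E := expR A; set p := normal_peak 1 => e1 pE.
nra.
Qed.

Lemma pdf_ub x : pdf x <= normal_peak (1:R).
Proof. exact: normal_pdf_ub (oner_neq0 _). Qed.

Lemma pdf_ge0 x : 0 <= pdf x.
Proof. exact: normal_pdf_ge0. Qed.

Lemma pdf_decay D : (4 + D ^+ 2) ^+ 2 * pdf (- D / 8) <= (256 * 256) * normal_peak (1:R).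
Proof.
rewrite pdfE.
set y := D ^+ 2 / 128.
have y0 : 0 <= y by rewrite /y divr_ge0 ?sqr_ge0.
have -> : - ((- D / 8) ^+ 2) / 2 = - y by rewrite /y; field.
have hD : D ^+ 2 = 128 * y by rewrite /y; field.
have e1 := expR_ge1Dx (y / 2).
have ey : expR y = expR (y / 2) * expR (y / 2) by rewrite -expRD; congr expR; field.
have ep := expR_gt0 (y / 2).
have eN : expR (- y) * expR y = 1 by rewrite -expRD addNr expR0.
have eNp := expR_gt0 (- y).
have pk := peak_gt0.
rewrite hD.
have key : (4 + 128 * y) ^+ 2 <= (256 * 256) * expR y.
  rewrite ey; nra.
move: key eN eNp; set E := expR y; set F := expR (- y) => key eN eNp.
have k2 : (4 + 128 * y) ^+ 2 * F <= 256 * 256 by nra.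
move: pk k2; set p := normal_peak 1; set Z := (4 + 128 * y) ^+ 2 => pk k2.
nra.
Qed.

Lemma core (D d M s K k tau hh eb : R) :
  0 < d -> d <= D -> 0 <= M -> 0 <= hh -> 0 < s ->
  2 * s * k = K ->
  K <= D * s ->
  (D * s) ^+ 2 - K ^+ 2 <= D ^+ 2 * M * hh ->
  D ^+ 2 <= 2 * K * (4 + D ^+ 2) ->
  4 * M * hh * (4 + D ^+ 2) ^+ 2 <= D ^+ 2 ->
  4 * s * `|tau| <= K ->
  D ^+ 2 * tau ^+ 2 <= 8 * eb ^+ 2 + 8 * hh * (4 + D ^+ 2) ^+ 2 ->
  `| 2^-1 * Phi (tau - k) + 2^-1 * Phibar (tau + k) - Phi (- D / 2) |
   <= normal_peak (1:R) * (256 * 256) * (4 + M) / d * (hh + `|eb| ^+ 2).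
Proof.
move=> d0 dD M0 hh0 s0 hk KD H3 H4 H5 H6 H7.
have D0 : 0 < D by apply: lt_le_trans dD.
have kle : k <= D / 2 by nra.
have hs : D <= 2 * s * (4 + D ^+ 2) by nra.
have K0 : 0 <= K by nra.
have hDK : D * s - K <= M * hh * (4 + D ^+ 2).
  have a1 : (D * s - K) * (D * s + K) <= D ^+ 2 * M * hh by nra.
  have a2 : D ^+ 2 <= (D * s + K) * (4 + D ^+ 2) by nra.
  have a3 : 0 <= D * s - K by lra.
  have a4 : (D * s - K) * D ^+ 2 <= D ^+ 2 * (M * hh * (4 + D ^+ 2)) by nra.
  have D2 : 0 < D ^+ 2 by exact: exprn_gt0.
  nra.
set w := D / 2 - k.
have w0 : 0 <= w by rewrite /w subr_ge0.
have hw : w * D <= M * hh * (4 + D ^+ 2) ^+ 2.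
  have : w * (2 * s) = D * s - K by rewrite /w -hk; field.
  nra.
have w4 : w <= D / 4.
  have : w * D <= (D / 4) * D by lra.
  by rewrite ler_pM2r.
have kge : D / 4 <= k by move: w4; rewrite /w; lra.
set t := `|tau| in H6 *.
have t0 : 0 <= t by exact: normr_ge0.
have tk : t <= k / 2 by nra.
have Phit : Phi (tau - k) + Phibar (tau + k) = Phi (t - k) + Phi (- k - t).
  rewrite /Phibar -Phi_sym /t; case: (lerP 0 tau) => ht.
    by rewrite ger0_norm//; congr (_ + Phi _); ring.
  by rewrite ltr0_norm// addrC; congr (Phi _ + Phi _); ring.
have B1 := Phi_neg_bounds (- k) (t - k).
have B2 := Phi_neg_bounds (- k - t) (- k).
have B3 := Phi_neg_bounds (- D / 2) (- k).
have k0 : 0 <= k by nra.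
have /andP[B1l B1u] : t * pdf (- k) <= Phi (t - k) - Phi (- k) <= t * pdf (t - k).
  move: (B1 ltac:(lra) ltac:(lra)); have -> : t - k - - k = t by ring. done.
have /andP[B2l B2u] : t * pdf (- k - t) <= Phi (- k) - Phi (- k - t) <= t * pdf (- k).
  move: (B2 ltac:(lra) ltac:(lra)); have -> : - k - (- k - t) = t by ring. done.
have /andP[B3l B3u] : w * pdf (- D / 2) <= Phi (- k) - Phi (- D / 2) <= w * pdf (- k).
  move: (B3 ltac:(lra) ltac:(lra)); have -> : - k - (- D / 2) = w by rewrite /w; field. done.
clear B1 B2 B3.
have lip := @pdf_lip t k t0 k0.
have m1 : pdf (t - k) <= pdf (- D / 8) by apply: pdf_mono; lra.
have m2 : pdf (- k) <= pdf (- D / 8) by apply: pdf_mono; lra.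
have q0 := pdf_ge0 (- D / 8).
have p2 := pdf_ge0 (- D / 2).
have dec := pdf_decay D.
have qub := pdf_ub (- D / 8).
have pk := peak_gt0.
set X := 2^-1 * Phi (tau - k) + 2^-1 * Phibar (tau + k) - Phi (- D / 2).
have XE : X = 2^-1 * (Phi (t - k) - Phi (- k)) - 2^-1 * (Phi (- k) - Phi (- k - t))
              + (Phi (- k) - Phi (- D / 2)).
  by rewrite /X -mulrDr Phit; field.
have wp : 0 <= w * pdf (- D / 2) by apply: mulr_ge0.
have X0 : 0 <= X by rewrite XE; lra.
have lip2 := ler_wpM2l (divr_ge0 t0 (ler0n _ 2)) lip.
have Xub : X <= k * t ^+ 2 * pdf (t - k) + w * pdf (- k).
  rewrite XE.
  have : t / 2 * (2 * k * t * pdf (t - k)) = k * t ^+ 2 * pdf (t - k) by field.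
  have : t / 2 * (pdf (t - k) - pdf (- k - t)) = 2^-1 * (t * pdf (t - k)) - 2^-1 * (t * pdf (- k - t)) by field.
  lra.
set q := pdf (- D / 8) in m1 m2 q0 dec qub *.
set p := normal_peak 1 in dec qub pk *.
have kt0 : 0 <= k * t ^+ 2 by rewrite mulr_ge0 ?sqr_ge0.
have f1 := ler_wpM2l kt0 m1.
have f2 := ler_wpM2l w0 m2.
have Xq : X <= (k * t ^+ 2 + w) * q by lra.
have hk2 : 0 <= D / 2 - k by lra.
have f3 : 0 <= (D / 2 - k) * t ^+ 2 * q * D by rewrite !mulr_ge0 // ?sqr_ge0 // ltW.
have f4 := ler_wpM2r q0 hw.
have XD : X * D <= (D ^+ 2 * t ^+ 2 / 2 + M * hh * (4 + D ^+ 2) ^+ 2) * q.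
  have := ler_wpM2r (ltW D0) Xq.
  have : (k * t ^+ 2 + w) * q * D = k * t ^+ 2 * q * D + w * D * q by ring.
  have : (D ^+ 2 * t ^+ 2 / 2 + M * hh * (4 + D ^+ 2) ^+ 2) * q = D ^+ 2 * t ^+ 2 / 2 * q + M * hh * (4 + D ^+ 2) ^+ 2 * q by ring.
  have : (D / 2 - k) * t ^+ 2 * q * D = D ^+ 2 * t ^+ 2 / 2 * q - k * t ^+ 2 * q * D by field.
  lra.
have tt : t ^+ 2 = tau ^+ 2 by rewrite /t real_normK ?num_real.
have f5 := ler_wpM2r (divr_ge0 q0 (ler0n _ 2)) H7.
have XD2 : X * D <= (4 * eb ^+ 2 + (4 + M) * hh * (4 + D ^+ 2) ^+ 2) * q.
  have : D ^+ 2 * t ^+ 2 / 2 * q = D ^+ 2 * tau ^+ 2 * (q / 2) by rewrite tt; field.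
  have : (8 * eb ^+ 2 + 8 * hh * (4 + D ^+ 2) ^+ 2) * (q / 2) = (4 * eb ^+ 2 + 4 * hh * (4 + D ^+ 2) ^+ 2) * q by field.
  lra.
have eb0 : 0 <= eb ^+ 2 by exact: sqr_ge0.
have f6 := ler_wpM2l eb0 qub.
have f7 : 0 <= (4 + M) * hh by rewrite mulr_ge0// addr_ge0.
have f8 := ler_wpM2l f7 dec.
have f9 : 0 <= eb ^+ 2 * p by rewrite mulr_ge0// ltW.
have XD3 : X * D <= p * ((256 * 256) * (4 + M) * (hh + eb ^+ 2)).
  have : (4 * eb ^+ 2 + (4 + M) * hh * (4 + D ^+ 2) ^+ 2) * q = 4 * (eb ^+ 2 * q) + (4 + M) * hh * ((4 + D ^+ 2) ^+ 2 * q) by ring.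
  have : p * ((256 * 256) * (4 + M) * (hh + eb ^+ 2)) = (4 + M) * hh * ((256 * 256) * p) + (256 * 256) * (4 + M) * (eb ^+ 2 * p) by ring.
  have : 4 * (eb ^+ 2 * p) <= (256 * 256) * (4 + M) * (eb ^+ 2 * p).
    rewrite ler_wpM2r//. have : (4:R) <= 256 * 256 * 1 by lra. nra.
  lra.
rewrite ger0_norm// real_normK ?num_real//.
have Xd : X * d <= X * D by apply: ler_wpM2l.
have -> : p * (256 * 256) * (4 + M) / d * (hh + eb ^+ 2) = p * ((256 * 256) * (4 + M) * (hh + eb ^+ 2)) / d by ring.
rewrite ler_pdivlMr//.
lra.
Qed.
End Phi.


Section Mx.
Context {R : realType} {p : nat}.
Implicit Types (a b c : 'cV[R]_p) (S : 'M[R]_p).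

Lemma dotvC a b : dotv a b = dotv b a.
Proof. by rewrite /dotv -[a^T *m b]trmxK trmx_mul trmxK mxE. Qed.

Lemma dotvDl a b c : dotv (a + b) c = dotv a c + dotv b c.
Proof. by rewrite /dotv linearD /= mulmxDl mxE. Qed.

Lemma dotvZl k a b : dotv (k *: a) b = k * dotv a b.
Proof. by rewrite /dotv linearZ /= -scalemxAl mxE. Qed.

Lemma dotvNl a b : dotv (- a) b = - dotv a b.
Proof. by rewrite -scaleN1r dotvZl mulN1r. Qed.

Lemma dotvBl a b c : dotv (a - b) c = dotv a c - dotv b c.
Proof. by rewrite dotvDl dotvNl. Qed.

Lemma dotvDr a b c : dotv a (b + c) = dotv a b + dotv a c.
Proof. by rewrite dotvC dotvDl !(dotvC a). Qed.

Lemma dotvZr k a b : dotv a (k *: b) = k * dotv a b.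
Proof. by rewrite dotvC dotvZl dotvC. Qed.

Lemma dotvNr a b : dotv a (- b) = - dotv a b.
Proof. by rewrite dotvC dotvNl dotvC. Qed.

Lemma dotvBr a b c : dotv a (b - c) = dotv a b - dotv a c.
Proof. by rewrite dotvDr dotvNr. Qed.

Lemma dotv_mx S a b : dotv a (S *m b) = dotv (S^T *m a) b.
Proof. by rewrite /dotv trmx_mul trmxK mulmxA. Qed.

Lemma dotv_ge0 a : 0 <= dotv a a.
Proof.
rewrite /dotv mxE; apply: sumr_ge0 => i _; rewrite mxE; rewrite -expr2; exact: sqr_ge0.
Qed.

Lemma norm2_sq a : norm2 a ^+ 2 = dotv a a.
Proof. by rewrite /norm2 sqr_sqrtr// dotv_ge0. Qed.

Lemma norm2_ge0 a : 0 <= norm2 a.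
Proof. exact: sqrtr_ge0. Qed.

End Mx.

Lemma CS0 (R : realType) (A B C : R) : 0 <= C ->
  (forall t, 0 <= A - 2 * t * B + t ^+ 2 * C) -> B ^+ 2 <= A * C.
Proof.
move=> C0 H; have [Cp|] := ltP 0 C.
  have := H (B / C).
  have -> : A - 2 * (B / C) * B + (B / C) ^+ 2 * C = A - B ^+ 2 / C.
    by field; rewrite gt_eqF.
  rewrite subr_ge0 ler_pdivrMr//.
move=> Cle; have C00 : C = 0 by apply/eqP; rewrite eq_le Cle C0.
rewrite C00 in H *.
have [->|Bn] := eqVneq B 0; first by rewrite expr0n mulr0.
have := H ((A + 1) / (2 * B)).
have -> : A - 2 * ((A + 1) / (2 * B)) * B + ((A + 1) / (2 * B)) ^+ 2 * 0 = -1.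
  by field.
by rewrite oppr_ge0 ler10.
Qed.

Section Mx2.
Context {R : realType} {p : nat}.
Implicit Types (a b c x y : 'cV[R]_p) (S : 'M[R]_p).

Lemma psd_of_pd S : (forall x, x != 0 -> 0 < dotv x (S *m x)) ->
  forall x, 0 <= dotv x (S *m x).
Proof.
move=> pd x; have [->|/pd/ltW//] := eqVneq x 0.
by rewrite /dotv !mulmx0 mxE.
Qed.

Lemma CS_S S x y : S^T = S -> (forall x, 0 <= dotv x (S *m x)) ->
  dotv x (S *m y) ^+ 2 <= dotv x (S *m x) * dotv y (S *m y).
Proof.
move=> sym psd; apply: CS0; first exact: psd.
move=> t; have := psd (x - t *: y).
rewrite mulmxBr -scalemxAr !dotvBl !dotvBr !dotvZl !dotvZr.
rewrite [dotv y (S *m x)]dotv_mx sym [dotv (S *m y) x]dotvC.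
set A := dotv x (S *m x); set B := dotv x (S *m y); set C := dotv y (S *m y).
move=> h; lra.
Qed.

Lemma CS_eucl x y : `|dotv x y| <= norm2 x * norm2 y.
Proof.
have psd1 : forall z : 'cV[R]_p, 0 <= dotv z (1%:M *m z) by move=> z; rewrite mul1mx dotv_ge0.
have := @CS_S 1%:M x y (trmx1 _ _) psd1.
rewrite !mul1mx -!norm2_sq -(real_normK (num_real (dotv x y))) => h.
have n1 := norm2_ge0 x; have n2 := norm2_ge0 y; have n3 := normr_ge0 (dotv x y).
rewrite -exprMn in h; have P0 := mulr_ge0 n1 n2; move: h P0 n3; set P := norm2 x * norm2 y; set Bn := `|dotv x y| => h P0 n3.
nra.
Qed.
End Mx2.

Section Mx3.
Context {R : realType} {p : nat}.
Implicit Types (a b c x y : 'cV[R]_p) (S : 'M[R]_p).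

Lemma pd_unit S : (forall x, x != 0 -> 0 < dotv x (S *m x)) -> S \in unitmx.
Proof.
move=> pd; rewrite unitmxE unitfE; apply/negP => /det0P [v vn0 vS].
have : v^T != 0 by rewrite trmx_eq0.
by move=> /pd; rewrite /dotv trmxK mulmxA vS mul0mx mxE ltxx.
Qed.

Lemma theta_star_eq S d ts : S^T = S ->
  (forall x, x != 0 -> 0 < dotv x (S *m x)) ->
  (forall th, cond_sq_loss S d ts <= cond_sq_loss S d th) ->
  ts = (4 + dotv d (invmx S *m d))^-1 *: (invmx S *m d).
Proof.
move=> sym pd min.
have uS := pd_unit S pd.
have psd := psd_of_pd S pd.
set b := invmx S *m d.
have Sb : S *m b = d by rewrite /b mulmxA mulmxV// mul1mx.
set D2 := dotv d b.
have D2e : D2 = dotv b (S *m b) by rewrite Sb dotvC.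
have D20 : 0 <= D2 by rewrite D2e psd.
set c := (4 + D2)^-1.
have hc : c * (4 + D2) = 1 by rewrite /c mulVf// gt_eqF// ltr_wpDr.
set h := ts - c *: b.
have eth : ts = c *: b + h by rewrite /h addrC subrK.
clearbody h.
have := min (c *: b).
rewrite /cond_sq_loss eth.
rewrite -scalemxAr Sb mulmxDr -scalemxAr Sb.
rewrite !dotvDl !dotvZl !dotvDr !dotvZr.
rewrite (dotv_mx S b h) sym Sb (dotvC b d) (dotvC h d) -/D2.
have H0 := psd h.
set g := dotv d h; set H := dotv h (S *m h).
move=> ineq.
have e : 2^-1 * (2^-1 - (c * D2 + g) / 2) ^+ 2 +
    2^-1 * (- 2^-1 + (c * D2 + g) / 2) ^+ 2 +
    (c * (c * D2 + g) + (c * g + H)) -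
    (2^-1 * (2^-1 - c * D2 / 2) ^+ 2 + 2^-1 * (- 2^-1 + c * D2 / 2) ^+ 2 +
    c * (c * D2)) = g ^+ 2 / 4 + H + g * (c * (4 + D2) - 1) / 2 by field.
rewrite hc subrr mulr0 mul0r addr0 in e.
have g2 : 0 <= g ^+ 2 / 4 by rewrite divr_ge0 ?sqr_ge0.
have Hle : H <= 0 by lra.
have h0 : h = 0.
  apply/eqP; apply: contraTT Hle => hn; rewrite -ltNge; exact: pd.
by rewrite h0 addr0.
Qed.
End Mx3.


Definition epsf {R : realType} {p : nat} (S : 'M[R]_p) (dl : 'cV[R]_p) (M : R) : R :=
  let b := invmx S *m dl in let D2 := dotv dl b in let c := (4 + D2)^-1 in
  Num.min 1 (Num.min (c * D2 / (2 * (norm2 dl + 1)))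
    (Num.min (D2 / (4 * (`|M| + 1) * (4 + D2) ^+ 2)) (c * D2 / (8 * (c * norm2 b + 1))))).

Lemma scal {R : realType} (D d M D2 c g H eb eh nh ndl nb eps : R) :
  0 < d -> d <= D -> D ^+ 2 = D2 -> 0 < c -> c * (4 + D2) = 1 -> 0 <= M ->
  0 <= nh -> 0 <= ndl -> 0 <= nb ->
  nh <= eps -> eps <= 1 ->
  eps * (2 * (ndl + 1)) <= c * D2 -> eps * (4 * (M + 1) * (4 + D2) ^+ 2) <= D2 ->
  eps * (8 * (c * nb + 1)) <= c * D2 ->
  g ^+ 2 <= D2 * H -> H <= M * nh ^+ 2 -> `|g| <= ndl * nh ->
  `|eb| <= eps * nb -> `|eh| <= eps * nh ->
  `|2^-1 * Phi ((c * eb + eh - (c * D2 + g) / 2) / Num.sqrt (c ^+ 2 * D2 + 2 * c * g + H))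
    + 2^-1 * Phibar ((c * eb + eh + (c * D2 + g) / 2) / Num.sqrt (c ^+ 2 * D2 + 2 * c * g + H))
    - Phi (- D / 2)|
  <= normal_peak 1 * (256 * 256) * (4 + M) / d * (nh ^+ 2 + `|eb| ^+ 2).
Proof.
move=> d0 dD DD c0 hc M0 nh0 ndl0 nb0 nhe e1 ea1 ea2 ea3 CS Hub gub ebb ehb.
have D0 : 0 < D by apply: lt_le_trans dD.
have D2p : 0 < D2 by rewrite -DD exprn_gt0.
have eps0 : 0 <= eps by apply: le_trans nhe.
set K := c * D2 + g.
have g1 : - g <= `|g| by rewrite -normrN ler_norm.
have ng : ndl * nh <= ndl * eps by apply: ler_wpM2l.
have Kge : c * D2 / 2 <= K by rewrite /K; lra.
set Q := c ^+ 2 * D2 + 2 * c * g + H.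
have QK : D2 * Q - K ^+ 2 = D2 * H - g ^+ 2 by rewrite /Q /K; ring.
have cD : 0 < c * D2 by exact: mulr_gt0.
have K0 : 0 < K by lra.
have K2 : 0 < K ^+ 2 by exact: exprn_gt0.
have Q0 : 0 < Q.
  have : 0 < D2 * Q by lra.
  by rewrite pmulr_rgt0.
set s := Num.sqrt Q.
have s0 : 0 < s by rewrite sqrtr_gt0.
have ss : s ^+ 2 = Q by rewrite sqr_sqrtr // ltW.
set k := K / (2 * s).
set tau := (c * eb + eh) / s.
have A1 : (c * eb + eh - K / 2) / s = tau - k by rewrite /tau /k; field; rewrite gt_eqF.
have A2 : (c * eb + eh + K / 2) / s = tau + k by rewrite /tau /k; field; rewrite gt_eqF.
rewrite A1 A2.
apply: (@core R D d M s K k tau (nh ^+ 2) eb) => //.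
- by rewrite sqr_ge0.
- by rewrite /k; field; rewrite gt_eqF.
- have Ds : 0 <= D * s by rewrite mulr_ge0 // ltW.
  have : K ^+ 2 <= (D * s) ^+ 2 by rewrite exprMn DD ss; lra.
  move: Ds; set Y := D * s; nra.
- have : (D * s) ^+ 2 = D2 * Q by rewrite exprMn DD ss.
  have : D2 * H <= D2 * (M * nh ^+ 2) by apply: ler_wpM2l => //; exact: ltW.
  rewrite DD; have := sqr_ge0 g; lra.
- rewrite DD.
  have : D2 = c * D2 * (4 + D2) by rewrite mulrAC hc mul1r.
  have : c * D2 * (4 + D2) <= 2 * K * (4 + D2).
    by apply: ler_wpM2r; [rewrite addr_ge0 // ltW | lra].
  lra.
- rewrite DD.
  have nh2 : nh ^+ 2 <= eps.
    have : nh * nh <= eps * 1 by apply: ler_pM => //; apply: le_trans e1.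
    by rewrite mulr1 -expr2.
  have P0 : 0 <= 4 * (4 + D2) ^+ 2 by rewrite mulr_ge0 // sqr_ge0.
  have := ler_wpM2r P0 (ler_pM M0 (sqr_ge0 nh) (lexx M) nh2).
  have : M * eps * (4 * (4 + D2) ^+ 2) <= eps * (4 * (M + 1) * (4 + D2) ^+ 2).
    have := mulr_ge0 eps0 P0.
    have -> : eps * (4 * (M + 1) * (4 + D2) ^+ 2) = M * eps * (4 * (4 + D2) ^+ 2) + eps * (4 * (4 + D2) ^+ 2) by ring.
    lra.
  have -> : 4 * M * nh ^+ 2 * (4 + D2) ^+ 2 = M * nh ^+ 2 * (4 * (4 + D2) ^+ 2) by ring.
  lra.
- have stau : s * `|tau| = `|c * eb + eh|.
    by rewrite /tau normrM normfV (gtr0_norm s0) mulrC divfK // gt_eqF.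
  have t1 : `|c * eb + eh| <= c * `|eb| + `|eh|.
    by rewrite (le_trans (ler_normD _ _)) // normrM gtr0_norm.
  have t2 : c * `|eb| <= c * (eps * nb) by apply: ler_wpM2l => //; exact: ltW.
  have t3 : eps * nh <= eps * 1 by apply: ler_wpM2l => //; apply: le_trans e1.
  have : 4 * (s * `|tau|) <= K.
    rewrite stau.
    have : 8 * (c * (eps * nb) + eps) <= c * D2.
      by have -> : 8 * (c * (eps * nb) + eps) = eps * (8 * (c * nb + 1)) by ring.
    lra.
  by rewrite mulrA.
-
  rewrite DD.
  have Q4 : c ^+ 2 * D2 <= 4 * Q.
    have : (c * D2 / 2) ^+ 2 <= K ^+ 2.
      have h0 : 0 <= c * D2 / 2 by lra.
      have h00 : 0 <= K by lra.
      by rewrite ler_sqr ?nnegrE.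
    have : K ^+ 2 <= D2 * Q by lra.
    move=> h1 h2.
    have : D2 * (c ^+ 2 * D2) <= D2 * (4 * Q).
      have -> : D2 * (c ^+ 2 * D2) = 4 * (c * D2 / 2) ^+ 2 by field.
      lra.
    by rewrite ler_pM2l.
  have taue : tau ^+ 2 * Q = (c * eb + eh) ^+ 2.
    by rewrite /tau -ss; field; rewrite gt_eqF.
  have ehn : eh ^+ 2 <= nh ^+ 2.
    have : eps * nh <= 1 * nh by apply: ler_wpM2r.
    rewrite mul1r => h1.
    have h2 : `|eh| <= nh by apply: le_trans ehb h1.
    rewrite -real_normK ?num_real //.
    by rewrite ler_sqr ?nnegrE ?normr_ge0.
  have sq : (c * eb + eh) ^+ 2 <= 2 * (c ^+ 2 * eb ^+ 2) + 2 * eh ^+ 2.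
    have := sqr_ge0 (c * eb - eh).
    have -> : (c * eb - eh) ^+ 2 = 2 * (c ^+ 2 * eb ^+ 2) + 2 * eh ^+ 2 - (c * eb + eh) ^+ 2 by ring.
    by rewrite subr_ge0.
  have f1 : 2 * eb ^+ 2 * (c ^+ 2 * D2) <= 2 * eb ^+ 2 * (4 * Q).
    have q1 := sqr_ge0 eb.
    by apply: ler_wpM2l => //; apply: mulr_ge0.
  have f2 : 2 * nh ^+ 2 * (4 + D2) ^+ 2 * (c ^+ 2 * D2) <= 2 * nh ^+ 2 * (4 + D2) ^+ 2 * (4 * Q).
    have q1 := sqr_ge0 nh; have q2 := sqr_ge0 (4 + D2).
    by apply: ler_wpM2l => //; apply: mulr_ge0 => //; apply: mulr_ge0.
  have f2e : 2 * nh ^+ 2 * (4 + D2) ^+ 2 * (c ^+ 2 * D2) = 2 * nh ^+ 2 * D2.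
    have -> : 2 * nh ^+ 2 * (4 + D2) ^+ 2 * (c ^+ 2 * D2) = 2 * nh ^+ 2 * D2 * (c * (4 + D2)) ^+ 2 by ring.
    by rewrite hc expr1n mulr1.
  have f3 : D2 * (c * eb + eh) ^+ 2 <= D2 * (2 * (c ^+ 2 * eb ^+ 2) + 2 * nh ^+ 2).
    by apply: ler_wpM2l; [exact: ltW | lra].
  have key : D2 * tau ^+ 2 * Q <= (8 * eb ^+ 2 + 8 * nh ^+ 2 * (4 + D2) ^+ 2) * Q.
    rewrite -mulrA taue.
    have -> : (8 * eb ^+ 2 + 8 * nh ^+ 2 * (4 + D2) ^+ 2) * Q = 2 * eb ^+ 2 * (4 * Q) + 2 * nh ^+ 2 * (4 + D2) ^+ 2 * (4 * Q) by ring.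
    lra.
  by rewrite ler_pM2r in key.
Qed.


Lemma pointwise {R : realType} {p : nat} (S : 'M[R]_p) (m1 m2 ts mh1 mh2 th : 'cV[R]_p) (M d : R) :
  S^T = S ->
  (forall x : 'cV[R]_p, x != 0 -> 0 < dotv x (S *m x)) ->
  (forall x : 'cV[R]_p, norm2 (S *m x) <= M * norm2 x) ->
  0 < d -> d <= Mahal S (m1 - m2) ->
  (forall theta : 'cV[R]_p, cond_sq_loss S (m1 - m2) ts <= cond_sq_loss S (m1 - m2) theta) ->
  `|norm2 (mh1 - m1)| <= epsf S (m1 - m2) M ->
  `|norm2 (mh2 - m2)| <= epsf S (m1 - m2) M ->
  `|norm2 (th - ts)| <= epsf S (m1 - m2) M ->
  `| cond_risk S m1 m2 (2^-1 *: (mh1 + mh2)) th - Phi (- Mahal S (m1 - m2) / 2) |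
     <= normal_peak (1:R) * (256 * 256) * (4 + `|M|) / d *
        (norm2 (th - ts) ^+ 2
         + `| dotv (2^-1 *: (mh1 + mh2) - 2^-1 *: (m1 + m2)) (invmx S *m (m1 - m2)) | ^+ 2).
Proof.
move=> sym pd hM d0 hd min hn1 hn2 hnh.
rewrite ger0_norm in hn1; last exact: norm2_ge0.
rewrite ger0_norm in hn2; last exact: norm2_ge0.
rewrite ger0_norm in hnh; last exact: norm2_ge0.
set dl := m1 - m2 in hd min hn1 hn2 hnh *.
set eps := epsf S dl M in hn1 hn2 hnh.
have uS := pd_unit S pd.
have psd := psd_of_pd S pd.
set b := invmx S *m dl.
have Sb : S *m b = dl by rewrite /b mulmxA mulmxV// mul1mx.
set D2 := dotv dl b.
have D2e : D2 = dotv b (S *m b) by rewrite Sb dotvC.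
set D := Mahal S dl.
have DE : D = Num.sqrt D2 by [].
have D0 : 0 < D by apply: lt_le_trans hd.
have D2p : 0 < D2 by rewrite -sqrtr_gt0 -DE.
have DD : D ^+ 2 = D2 by rewrite DE sqr_sqrtr// ltW.
set c := (4 + D2)^-1.
have c0 : 0 < c by rewrite invr_gt0 addr_gt0.
have hc : c * (4 + D2) = 1 by rewrite mulVf// gt_eqF// addr_gt0.
have tsE : ts = c *: b := theta_star_eq S dl ts sym pd min.
set nb := norm2 b; set ndl := norm2 dl.
have nb0 : 0 <= nb by exact: norm2_ge0.
have ndl0 : 0 <= ndl by exact: norm2_ge0.
set a1 := c * D2 / (2 * (ndl + 1)).
set a2 := D2 / (4 * (`|M| + 1) * (4 + D2) ^+ 2).
set a3 := c * D2 / (8 * (c * nb + 1)).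
have epsE : eps = Num.min 1 (Num.min a1 (Num.min a2 a3)) by [].
have M0 : 0 <= `|M| := normr_ge0 M.
have q1 : 0 < 2 * (ndl + 1) by lra.
have q2 : 0 < 4 * (`|M| + 1) * (4 + D2) ^+ 2.
  by apply: mulr_gt0; [lra | apply: exprn_gt0; lra].
have q3 : 0 < 8 * (c * nb + 1) by have := mulr_ge0 (ltW c0) nb0; lra.
have cD : 0 < c * D2 by exact: mulr_gt0.
have a1p : 0 < a1 by exact: divr_gt0.
have a2p : 0 < a2 by exact: divr_gt0.
have a3p : 0 < a3 by exact: divr_gt0.
have /andP[e1 /andP[ea1 /andP[ea2 ea3]]] : (eps <= 1) && ((eps <= a1) && ((eps <= a2) && (eps <= a3))).
  by rewrite -!le_min -epsE.
have ep : 0 < eps by rewrite epsE !lt_min ltr01 a1p a2p a3p.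
have ea1' : eps * (2 * (ndl + 1)) <= c * D2 by rewrite -ler_pdivlMr.
have ea2' : eps * (4 * (`|M| + 1) * (4 + D2) ^+ 2) <= D2 by rewrite -ler_pdivlMr.
have ea3' : eps * (8 * (c * nb + 1)) <= c * D2 by rewrite -ler_pdivlMr.
clear epsE a1p a2p a3p ea1 ea2 ea3.
have eE : 2^-1 *: (mh1 + mh2) - 2^-1 *: (m1 + m2) = 2^-1 *: ((mh1 - m1) + (mh2 - m2)).
  by apply/matrixP => i j; rewrite !mxE; ring.
have a1E : 2^-1 *: (mh1 + mh2) - m1 = 2^-1 *: ((mh1 - m1) + (mh2 - m2)) - 2^-1 *: dl.
  by apply/matrixP => i j; rewrite !mxE; field.
have a2E : 2^-1 *: (mh1 + mh2) - m2 = 2^-1 *: ((mh1 - m1) + (mh2 - m2)) + 2^-1 *: dl.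
  by apply/matrixP => i j; rewrite !mxE; field.
rewrite /cond_risk; cbv zeta.
rewrite a1E a2E eE.
set v1 := mh1 - m1 in hn1 *; set v2 := mh2 - m2 in hn2 *.
set h := th - ts in hnh *.
have thE : th = c *: b + h by rewrite /h tsE addrC subrK.
clearbody v1 v2 h.
rewrite thE.
set nh := norm2 h in hnh *; set n1 := norm2 v1 in hn1; set n2 := norm2 v2 in hn2.
set E := 2^-1 *: (v1 + v2).
have EE : forall x, dotv E x = 2^-1 * (dotv v1 x + dotv v2 x).
  by move=> x; rewrite /E dotvZl dotvDl.
clearbody E.
have Sbh : dotv b (S *m h) = dotv dl h by rewrite dotv_mx sym Sb.
have bdl : dotv b dl = D2 by rewrite dotvC.
have Sb_ : S *m (c *: b + h) = c *: dl + S *m h by rewrite mulmxDr -scalemxAr Sb.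
set g := dotv dl h; set H := dotv h (S *m h).
set eb := dotv E b; set eh := dotv E h.
have QE : dotv (c *: b + h) (S *m (c *: b + h)) = c ^+ 2 * D2 + 2 * c * g + H.
  rewrite Sb_ !dotvDl !dotvDr !dotvZl !dotvZr bdl Sbh -/g -/H (dotvC h dl) -/g.
  ring.
have N1 : dotv (E - 2^-1 *: dl) (c *: b + h) = (c * eb + eh) - (c * D2 + g) / 2.
  rewrite dotvBl !dotvDr !dotvZr !dotvZl -/eb -/eh -/g -/D2.
  ring.
have N2 : dotv (E + 2^-1 *: dl) (c *: b + h) = (c * eb + eh) + (c * D2 + g) / 2.
  rewrite dotvDl !dotvDr !dotvZr !dotvZl -/eb -/eh -/g -/D2.
  ring.
rewrite QE N1 N2.
have nh0 : 0 <= nh by exact: norm2_ge0.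
have n10 : 0 <= n1 by exact: norm2_ge0.
have n20 : 0 <= n2 by exact: norm2_ge0.
refine (@scal R D d `|M| D2 c g H eb eh nh ndl nb eps d0 _ DD c0 hc M0 nh0 ndl0 nb0 hnh e1 ea1' ea2' ea3' _ _ _ _ _).
- by rewrite -/D.
- by have := CS_S S b h sym psd; rewrite Sbh -D2e.
- have h1 : H <= `|H| by exact: ler_norm.
  have h2 : `|H| <= nh * norm2 (S *m h) by exact: CS_eucl.
  have h3 : nh * norm2 (S *m h) <= nh * (M * nh) by apply: ler_wpM2l => //; exact: hM.
  have h4 : M * nh ^+ 2 <= `|M| * nh ^+ 2 by apply: ler_wpM2r; [exact: sqr_ge0 | exact: ler_norm].
  have : nh * (M * nh) = M * nh ^+ 2 by rewrite expr2; ring.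
  lra.
- exact: CS_eucl.
- rewrite /eb EE.
  have h1 : `|dotv v1 b| <= n1 * nb by exact: CS_eucl.
  have h2 : `|dotv v2 b| <= n2 * nb by exact: CS_eucl.
  have h3 : n1 * nb <= eps * nb by exact: ler_wpM2r.
  have h4 : n2 * nb <= eps * nb by exact: ler_wpM2r.
  have i2 : 0 <= (2:R)^-1 by rewrite invr_ge0 ler0n.
  rewrite normrM (ger0_norm i2).
  have hX := ler_normD (dotv v1 b) (dotv v2 b).
  set X := `|_ + _| in hX *.
  have : 2^-1 * X <= 2^-1 * (n1 * nb + n2 * nb) by apply: ler_wpM2l => //; lra.
  have : 2^-1 * (n1 * nb + n2 * nb) <= eps * nb.
    have -> : eps * nb = 2^-1 * (eps * nb + eps * nb) by field.
    by apply: ler_wpM2l => //; lra.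
  lra.
- rewrite /eh EE.
  have h1 : `|dotv v1 h| <= n1 * nh by exact: CS_eucl.
  have h2 : `|dotv v2 h| <= n2 * nh by exact: CS_eucl.
  have h3 : n1 * nh <= eps * nh by exact: ler_wpM2r.
  have h4 : n2 * nh <= eps * nh by exact: ler_wpM2r.
  have i2 : 0 <= (2:R)^-1 by rewrite invr_ge0 ler0n.
  rewrite normrM (ger0_norm i2).
  have hX := ler_normD (dotv v1 h) (dotv v2 h).
  set X := `|_ + _| in hX *.
  have : 2^-1 * X <= 2^-1 * (n1 * nh + n2 * nh) by apply: ler_wpM2l => //; lra.
  have : 2^-1 * (n1 * nh + n2 * nh) <= eps * nh.
    have -> : eps * nh = 2^-1 * (eps * nh + eps * nh) by field.
    by apply: ler_wpM2l => //; lra.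
  lra.
Qed.

Lemma epsf_gt0 {R : realType} {p : nat} (S : 'M[R]_p) (dl : 'cV[R]_p) (M d : R) :
  0 < d -> d <= Mahal S dl -> 0 < epsf S dl M.
Proof.
move=> d0 hd.
have D0 : 0 < Mahal S dl by apply: lt_le_trans hd.
set D2 := dotv dl (invmx S *m dl).
have D2p : 0 < D2 by move: D0; rewrite /Mahal sqrtr_gt0.
set c := (4 + D2)^-1.
have c0 : 0 < c by rewrite invr_gt0 addr_gt0.
have nb0 := norm2_ge0 (invmx S *m dl).
have ndl0 := norm2_ge0 dl.
have M0 : 0 <= `|M| := normr_ge0 M.
have q1 : 0 < 2 * (norm2 dl + 1) by lra.
have q2 : 0 < 4 * (`|M| + 1) * (4 + D2) ^+ 2.
  by apply: mulr_gt0; [lra | apply: exprn_gt0; lra].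
have q3 : 0 < 8 * (c * norm2 (invmx S *m dl) + 1) by have := mulr_ge0 (ltW c0) nb0; lra.
have cD : 0 < c * D2 by exact: mulr_gt0.
rewrite /epsf -/D2 -/c !lt_min ltr01 !divr_gt0 //.
Qed.

Theorem proposition1 (R : realType) (p : nat)
  (Sigma : R -> 'M[R]_p) (mu1 mu2 : R -> 'cV[R]_p) (theta_star : R -> 'cV[R]_p)
  (muhat1 muhat2 thetahat : nat -> R -> 'cV[R]_p) :
  (* Sigma(u) is a covariance matrix: symmetric, positive definite *)
  (forall u, 0 <= u <= 1 -> (Sigma u)^T = Sigma u) ->
  (forall u, 0 <= u <= 1 -> forall x : 'cV[R]_p, x != 0 -> 0 < dotv x (Sigma u *m x)) ->
  (* sup_u ||Sigma(u)||_2 < oo *)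
  (exists M : R, forall u, 0 <= u <= 1 -> forall x : 'cV[R]_p,
      norm2 (Sigma u *m x) <= M * norm2 x) ->
  (* inf_u Delta(u) > 0 *)
  (exists d : R, 0 < d /\ forall u, 0 <= u <= 1 -> d <= Mahal (Sigma u) (mu1 u - mu2 u)) ->
  (* theta*(u) minimizes E[(Z - theta^T (X - mu(U)))^2 | U = u] *)
  (forall u, 0 <= u <= 1 -> forall theta : 'cV[R]_p,
      cond_sq_loss (Sigma u) (mu1 u - mu2 u) (theta_star u)
      <= cond_sq_loss (Sigma u) (mu1 u - mu2 u) theta) ->
  (* consistency of the estimators, for each u *)
  (forall u, 0 <= u <= 1 -> (fun n => norm2 (muhat1 n u - mu1 u)) @ \oo --> (0 : R)) ->
  (forall u, 0 <= u <= 1 -> (fun n => norm2 (muhat2 n u - mu2 u)) @ \oo --> (0 : R)) ->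
  (forall u, 0 <= u <= 1 -> (fun n => norm2 (thetahat n u - theta_star u)) @ \oo --> (0 : R)) ->
  exists C : R, 0 < C /\
    forall u, 0 <= u <= 1 ->
    \forall n \near \oo,
      let muhat := 2^-1 *: (muhat1 n u + muhat2 n u) in
      let mu := 2^-1 *: (mu1 u + mu2 u) in
      let beta_star := invmx (Sigma u) *m (mu1 u - mu2 u) in
      `| cond_risk (Sigma u) (mu1 u) (mu2 u) muhat (thetahat n u)
         - Phi (- Mahal (Sigma u) (mu1 u - mu2 u) / 2) |
      <= C * (norm2 (thetahat n u - theta_star u) ^+ 2
              + `| dotv (muhat - mu) beta_star | ^+ 2).
Proof.
move=> hsym hpd [M hM] [d [d0 hd]] hmin c1 c2 c3.
exists (normal_peak (1:R) * (256 * 256) * (4 + `|M|) / d); split.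
  apply: divr_gt0 => //; apply: mulr_gt0; first by apply: mulr_gt0 => //; exact: peak_gt0.
  by have := normr_ge0 M; lra.
move=> u hu.
have ep := @epsf_gt0 R p (Sigma u) (mu1 u - mu2 u) M d d0 (hd u hu).
set eps := epsf (Sigma u) (mu1 u - mu2 u) M in ep.
have E1 : \forall n \near \oo, `|norm2 (muhat1 n u - mu1 u)| <= eps.
  exact: (cvgr0_norm_le _ (c1 u hu) _ ep).
have E2 : \forall n \near \oo, `|norm2 (muhat2 n u - mu2 u)| <= eps.
  exact: (cvgr0_norm_le _ (c2 u hu) _ ep).
have E3 : \forall n \near \oo, `|norm2 (thetahat n u - theta_star u)| <= eps.
  exact: (cvgr0_norm_le _ (c3 u hu) _ ep).
near=> n.
have h1 : `|norm2 (muhat1 n u - mu1 u)| <= eps by near: n.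
have h2 : `|norm2 (muhat2 n u - mu2 u)| <= eps by near: n.
have h3 : `|norm2 (thetahat n u - theta_star u)| <= eps by near: n.
refine (pointwise (Sigma u) (mu1 u) (mu2 u) (theta_star u) (muhat1 n u) (muhat2 n u) (thetahat n u) M d (hsym u hu) (hpd u hu) (hM u hu) d0 (hd u hu) (hmin u hu) h1 h2 h3).
Unshelve. all: end_near.
Qed.
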